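(* Let $X$ be an infinite-dimensional Banach space over $\mathbb{R}$ with a Schauder basis $(a_n)_{n\in\mathbb{N}}$, and let $A=\{a_n:n\in\mathbb{N}\}$. Then $A$ is a topologically independent subset of the additive topological group of $X$, but $\langle A\rangle$ is not the Tychonoff direct sum $\bigoplus_{a\in A}\langle a\rangle$.
   Context: A subset $A$ of an abelian topological group $G$ (neutral element $0$) is topologically independent if $0\notin A$ and for every neighborhood $W$ of $0$ there is a neighborhood $U$ of $0$ such that for every finite $F\subseteq A$ and every family of integers $\{z_a: a\in F\}$, the condition $\sum_{a\in F}z_a a\in U$ implies $z_a a\in W$ for all $a\in F$. $\langle A\rangle$ is the additive subgroup generated by $A$ with the subspace topology. The Tychonoff direct sum $\bigoplus_{a\in A}\langle a\rangle$ is the direct sum of the groups $\langle a\rangle$ (subspace topology) with the topology induced from the product $\prod_{a\in A}\langle a\rangle$; ''$\langle A\rangle$ is the Tychonoff direct sum'' means the map $(g_a)\mapsto\sum_a g_a$ is an isomorphism of topological groups from $\bigoplus_{a\in A}\langle a\rangle$ onto $\langle A\rangle$. *)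

(* Defs.v *)
From HB Require Import structures.
From mathcomp Require Import all_boot all_order all_algebra.
From mathcomp Require Import all_classical all_reals all_analysis.
Set Implicit Arguments. Unset Strict Implicit. Unset Printing Implicit Defensive.
Import Order.TTheory GRing.Theory Num.Theory.
Import numFieldNormedType.Exports.
Local Open Scope classical_set_scope.
Local Open Scope ring_scope.

Section Defs.
Variable R : realType.

Definition schauder_basis (X : normedModType R) (a : nat -> X) : Prop :=
  forall x : X, exists! c : nat -> R,
    (fun n => \sum_(i < n) c i *: a i) @ \oo --> x.

Definition infinite_dimensional (X : normedModType R) : Prop :=
  forall (n : nat) (v : 'I_n -> X), exists x : X,
    forall c : 'I_n -> R, x <> \sum_(i < n) c i *: v i.
End Defs.

Section TopGroupDefs.
Variable G : topologicalZmodType.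

(** Topological independence of A (paper's definition). Finite subsets F of A
    are given by duplicate-free lists. *)
Definition top_independent (A : set G) : Prop :=
  ~ A 0 /\
  forall W : set G, nbhs 0 W -> exists U : set G, nbhs 0 U /\
    forall (F : seq G) (z : G -> int), uniq F -> (forall a, a \in F -> A a) ->
      U (\sum_(a <- F) a *~ z a) -> forall a, a \in F -> W (a *~ z a).

Definition gen_subgroup (A : set G) : set G :=
  [set x | exists (F : seq G) (z : G -> int), (forall a, a \in F -> A a) /\
           x = \sum_(a <- F) a *~ z a].

(** Carrier of the direct sum (+)_{a in A} <a>, realised inside the product
    prod_{x : G} G (pointwise/product topology): finitely supported families g
    with g a in <a> for a in A and g x = 0 outside A. *)
Definition dsum_carrier (A : set G) : set {ptws G -> G} :=
  [set g | finite_set [set x | g x != 0] /\ (forall x, ~ A x -> g x = 0) /\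
           forall a, A a -> exists k : int, g a = a *~ k].

Definition dsum_map (g : {ptws G -> G}) : G := \sum_(x \in [set: G]) g x.

(** <A> is the Tychonoff direct sum: the summation map is an isomorphism of
    topological groups from the direct sum (subspace of the product topology)
    onto <A> (subspace topology).  The map is always a group homomorphism, so
    this means: bijection onto <A>, continuous, with continuous inverse. *)
Definition is_tychonoff_direct_sum (A : set G) : Prop :=
  [/\ set_inj (dsum_carrier A) dsum_map,
      dsum_map @` dsum_carrier A = gen_subgroup A,
      {within dsum_carrier A, continuous dsum_map} &
      exists inv : G -> {ptws G -> G},
        (forall x, gen_subgroup A x ->
           dsum_carrier A (inv x) /\ dsum_map (inv x) = x) /\
        {within gen_subgroup A, continuous inv}].
End TopGroupDefs.

(* Main.v *)
Require Import Defs.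
From HB Require Import structures.
From mathcomp Require Import all_boot all_order all_algebra.
From mathcomp Require Import all_classical all_reals all_analysis.
From mathcomp Require Import ring lra.
Set Implicit Arguments. Unset Strict Implicit. Unset Printing Implicit Defensive.
Import Order.TTheory GRing.Theory Num.Theory.
Import numFieldNormedType.Exports.
Local Open Scope classical_set_scope.
Local Open Scope ring_scope.
Lemma subrACA (V : zmodType) (x y z w : V) : (x - y) - (z - w) = (x - z) - (y - w).
Proof. by rewrite !opprB addrACA [RHS]addrACA (addrC (- y)). Qed.

Lemma zhelp (V : zmodType) (x u v w : V) : (x + u - v) - (x - w) = u - (v - w).
Proof. by rewrite opprB addrC !addrA subrK opprB addrA (addrC w). Qed.

Section Basis.
Variables (R : realType) (X : completeNormedModType R) (a : nat -> X).
Hypothesis hb : schauder_basis a.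

Definition coef (x : X) : nat -> R := proj1_sig (cid (hb x)).
Definition P n (x : X) : X := \sum_(i < n) coef x i *: a i.

Lemma coefP x : (fun n => P n x) @ \oo --> x.
Proof. by rewrite /P /coef; case: (cid (hb x)) => c [] /=. Qed.

Lemma coefU (x : X) (c : nat -> R) : (fun n => \sum_(i < n) c i *: a i) @ \oo --> x -> c = coef x.
Proof.
rewrite /coef; case: (cid (hb x)) => c0 [] /= h0 u hc.
by apply/esym/u.
Qed.

Lemma coefD x y : coef (x + y) = fun i => coef x i + coef y i.
Proof.
apply/esym/coefU.
have -> : (fun n => \sum_(i < n) (coef x i + coef y i) *: a i) = (fun n => P n x + P n y).
  by apply/funext => n; rewrite /P -big_split /=; apply: eq_bigr => i _; rewrite scalerDl.
by apply: cvgD; exact: coefP.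
Qed.

Lemma coefZ s x : coef (s *: x) = fun i => s * coef x i.
Proof.
apply/esym/coefU.
have -> : (fun n => \sum_(i < n) (s * coef x i) *: a i) = (fun n => s *: P n x).
  by apply/funext => n; rewrite /P scaler_sumr; apply: eq_bigr => i _; rewrite scalerA.
by apply: cvgZr; exact: coefP.
Qed.

Lemma coef0 : coef 0 = fun _ => 0.
Proof. by rewrite -(scale0r (0:X)) coefZ; apply/funext => i; rewrite mul0r. Qed.

Lemma PD n x y : P n (x + y) = P n x + P n y.
Proof. by rewrite /P coefD -big_split /=; apply: eq_bigr => i _; rewrite scalerDl. Qed.

Lemma PZ n s x : P n (s *: x) = s *: P n x.
Proof. by rewrite /P coefZ scaler_sumr; apply: eq_bigr => i _; rewrite scalerA. Qed.

Lemma PN n x : P n (- x) = - P n x.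
Proof. by rewrite -scaleN1r PZ scaleN1r. Qed.

Lemma PB n x y : P n (x - y) = P n x - P n y.
Proof. by rewrite PD PN. Qed.

Lemma P0 n : P n 0 = 0.
Proof. by rewrite /P coef0 big1 // => i _; rewrite scale0r. Qed.

Lemma sum_ind (j n : nat) : \sum_(i < n) ((i == j :> nat)%:R : R) *: a i = ((j < n)%N%:R : R) *: a j.
Proof.
elim: n => [|n IH]; first by rewrite big_ord0 ltn0 scale0r.
rewrite big_ord_recr /= IH ltnS.
case: (ltngtP j n) => h.
- by rewrite scale0r addr0.
- by rewrite !scale0r addr0.
- by rewrite h scale0r add0r.
Qed.

Lemma coef_a j : coef (a j) = fun i => (i == j)%:R.
Proof.
apply/esym/coefU; rewrite (_ : (fun n => _) = fun n => ((j < n)%N%:R : R) *: a j); last first.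
  by apply/funext => n; rewrite sum_ind.
apply: cvg_near_cst; near=> n.
have -> : (j < n)%N by near: n; exists j.+1 => //.
by rewrite scale1r.
Unshelve. all: by end_near.
Qed.

Lemma a_neq0 j : a j != 0.
Proof.
apply/eqP => h; have := congr1 (fun f => f j) (coef_a j).
by rewrite h coef0 /= eqxx => /eqP; rewrite eq_sym oner_eq0.
Qed.

Lemma a_inj : injective a.
Proof.
move=> i j h; have := congr1 (fun f => f i) (coef_a j).
rewrite -h coef_a /= eqxx => /eqP; case: (eqVneq i j) => //.
by rewrite oner_eq0.
Qed.

Lemma Pdiff n x : P n.+1 x - P n x = coef x n *: a n.
Proof. by rewrite /P big_ord_recr /= addrAC subrr add0r. Qed.

Lemma cvgP_sum (n : nat) (u : nat -> nat -> R) (c : nat -> R) :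
  (forall i, u i @ \oo --> c i) ->
  (fun J => \sum_(i < n) u i J *: a i) @ \oo --> \sum_(i < n) c i *: a i.
Proof.
move=> h; elim: n => [|n IH].
  rewrite big_ord0; under eq_fun do rewrite big_ord0; exact: cvg_cst.
rewrite big_ord_recr /=; under eq_fun do rewrite big_ord_recr /=.
apply: cvgD => //; apply: cvgZ => //; exact: cvg_cst.
Qed.

Lemma closure_lemma (t : nat -> X) (y : X) (d : nat -> R) :
  t @ \oo --> y -> d @ \oo --> 0 ->
  (forall J J' n, (J <= J')%N -> `|P n (t J') - P n (t J)| <= d J) ->
  forall n J, `|P n y - P n (t J)| <= d J.
Proof.
move=> ty d0 hd.
have dge0 J : 0 <= d J by apply: le_trans (hd J J 0%N (leqnn J)); exact: normr_ge0.
pose u i J := coef (t J) i.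
have hu i J J' : (J <= J')%N -> `|u i J' - u i J| * `|a i| <= 2 * d J.
  move=> JJ'; rewrite -normrZ scalerBl /u -!Pdiff.
  rewrite subrACA.
  by apply: le_trans (ler_normB _ _) _; rewrite mulr2n mulrDl mul1r lerD // hd.
have cu i : cvg (u i @ \oo).
  apply/cauchy_cvgP/cauchy_exP => e e0.
  have ai0 : 0 < `|a i| by rewrite normr_gt0 a_neq0.
  have /cvgr0_norm_lt /(_ (e * `|a i| / 2)) : d @ \oo --> 0 by [].
  case; first by rewrite divr_gt0 // mulr_gt0.
  move=> N _ hN; exists (u i N), N => // m /= Nm.
  rewrite -ball_normE /ball_ /=.
  have := hu i N m Nm; rewrite -ler_pdivlMr // => h1.
  rewrite distrC; apply: le_lt_trans h1 _.
  rewrite ltr_pdivrMr // -ltr_pdivlMl // mulrC.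
  by have := hN N (leqnn N); rewrite ger0_norm.
pose c i := lim (u i @ \oo).
have uc i : u i @ \oo --> c i by exact: cu.
pose S n := \sum_(i < n) c i *: a i.
have PS n : (fun J => P n (t J)) @ \oo --> S n by exact: (@cvgP_sum n u c uc).
have bS n J : `|S n - P n (t J)| <= d J.
  have h : (fun J' => `|P n (t J') - P n (t J)|) @ \oo --> `|S n - P n (t J)|.
    by apply: cvg_norm; apply: cvgB => //; exact: cvg_cst.
  apply: (closed_cvg [set x : R | x <= d J] (@closed_le _ (d J)) _ _ h).
  by near=> J'; apply: hd; near: J'; exists J.
suff /coefU cE : (fun n => S n) @ \oo --> y.
  by move=> n J; have := bS n J; rewrite /S cE.
apply/cvgrPdist_lt => e e0.
have e3 : 0 < e / 3 by rewrite divr_gt0.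
have /cvgr0_norm_lt /(_ _ e3) [N1 _ hN1] := d0.
have /cvgrPdist_lt /(_ _ e3) [N2 _ hN2] := ty.
pose J := maxn N1 N2.
have /cvgrPdist_lt /(_ _ e3) [N3 _ hN3] := @coefP (t J).
exists N3 => // n /= Nn.
have -> : y - S n = (y - t J) + (t J - P n (t J)) + (P n (t J) - S n).
  by rewrite !addrA subrK subrK.
apply: le_lt_trans (ler_normD _ _) _.
have h1 : `|y - t J| < e / 3 by apply: hN2; rewrite /= leq_maxr.
have h2 : `|t J - P n (t J)| < e / 3 by exact: hN3.
have h3 : `|P n (t J) - S n| <= d J by rewrite distrC; exact: bS.
have h4 : d J < e / 3.
  by have := hN1 J (leq_maxl _ _); rewrite ger0_norm.
have h5 := ler_normD (y - t J) (t J - P n (t J)).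
lra.
Unshelve. all: by end_near.
Qed.

Lemma iterate_bound (M : R) : 0 <= M ->
  (forall (y : X) (eps : R), 0 < eps -> exists e, `|y - e| < eps /\ forall n, `|P n e| <= M * `|y|) ->
  forall y n, `|P n y| <= 2 * M * `|y|.
Proof.
move=> M0 hM y n.
have [->|y0] := eqVneq y 0; first by rewrite P0 normr0 mulr0.
pose rho := `|y|.
have rho0 : 0 < rho by rewrite normr_gt0.
pose q : R := 2^-1.
have q0 : 0 < q by rewrite invr_gt0 ltr0n.
have q1 : `|q| < 1 by rewrite gtr0_norm // invf_lt1 // ltr1n.
have /choice [g hg] : forall p : X * nat, exists e, `|p.1 - e| < q ^+ p.2.+1 * rho /\
    forall n, `|P n e| <= M * `|p.1|.
  by move=> [z j]; apply: hM; rewrite mulr_gt0 // exprn_gt0.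
pose fix rem j := if j is j'.+1 then rem j' - g (rem j', j') else y.
have remS j : rem j.+1 = rem j - g (rem j, j) by [].
have remb j : `|rem j| <= q ^+ j * rho.
  case: j => [|j]; first by rewrite expr0 mul1r.
  by rewrite remS; have [h _] := hg (rem j, j); apply: ltW.
have eb j n' : `|P n' (g (rem j, j))| <= M * (q ^+ j * rho).
  have [_ h] := hg (rem j, j); apply: le_trans (h n') _.
  by rewrite ler_wpM2l // remb.
have tele J k n' : `|P n' (rem J - rem (J + k)%N)| <= 2 * M * rho * (q ^+ J - q ^+ (J + k)%N).
  elim: k => [|k IH]; first by rewrite addn0 !subrr P0 normr0 mulr0.
  rewrite addnS remS opprB addrCA PD.
  apply: le_trans (ler_normD _ _) _.
  apply: le_trans (lerD (eb (J + k)%N n') IH) _.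
  rewrite exprSr; set w := q ^+ (J + k)%N.
  rewrite le_eqVlt; apply/orP; left; apply/eqP; rewrite /q; field=> //.
pose t J := y - rem J.
have rem0 : rem @ \oo --> 0.
  apply/cvgrPdist_lt => e e0.
  have hq : (fun j => q ^+ j * rho) @ \oo --> 0.
    rewrite -(mul0r rho); apply: cvgMl; exact: cvg_expr.
  have /cvgr0_norm_lt /(_ _ e0) [N _ hN] := hq.
  exists N => // j /= Nj; rewrite sub0r normrN.
  apply: le_lt_trans (remb j) _; have := hN j Nj; rewrite ger0_norm //.
  by rewrite mulr_ge0 // ?exprn_ge0 // ltW.
have ty : t @ \oo --> y.
  rewrite -[X in _ --> X]subr0; apply: cvgB => //; exact: cvg_cst.
pose d J := 2 * M * rho * q ^+ J.
have d0 : d @ \oo --> 0.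
  rewrite -(mulr0 (2 * M * rho)); apply: cvgMr; exact: cvg_expr.
have hd : forall K K' m, (K <= K')%N -> `|P m (t K') - P m (t K)| <= d K.
  move=> K K' m KK'; rewrite -(subnKC KK') -PB /t.
  rewrite (_ : (y - rem _) - (y - rem K) = rem K - rem (K + (K' - K))%N); last by rewrite opprB addrC addrA subrK.
  apply: le_trans (tele K (K' - K)%N m) _.
  rewrite /d; apply: ler_wpM2l; first by rewrite !mulr_ge0 // ltW.
  by rewrite gerBl exprn_ge0 // ltW.
have := closure_lemma ty d0 hd n 0.
by rewrite /t /d subrr P0 subr0 expr0 mulr1.
Qed.

Definition E (k : nat) : set X := [set x | forall n, `|P n x| <= k%:R].

Lemma P_bounded (x : X) : exists k : nat, E k x.
Proof.
have : cvgn (fun n => P n x) by apply/cvgP; exact: coefP.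
move=> /cvg_seq_bounded /ex_bound [|M /= HM].
  by apply: (@globally_properfilter _ _ 0%N).
exists (Num.trunc M).+1 => n; apply: le_trans (ltW (truncnS_gt M)).
exact: HM.
Qed.

Lemma baire_step : exists (k : nat) (x0 : X) (r : R), 0 < r /\ ball x0 r `<=` closure (E k).
Proof.
pose F k := ~` closure (E k).
have [[k nd]|alld] := pselect (exists k, ~ dense (F k)); last first.
  have hd : forall k, open (F k) /\ dense (F k).
    move=> k; split; first by rewrite /F openC; exact: closed_closure.
    by apply: contrapT => h; apply: alld; exists k.
  have [x [_ hx]] := Baire hd (ex_intro (fun x : X => setT x) 0 Logic.I) openT.
  have [k Ek] := P_bounded x.
  by exfalso; apply: (hx k Logic.I); apply: subset_closure.
move: nd; rewrite /dense; move=> /existsNP [U /not_implyP [[x0 Ox0] /not_implyP [oO hO]]].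
have /nbhs_ballP [r r0 hr] : nbhs x0 U by apply: open_nbhs_nbhs; split.
exists k, x0, r; split => // z bz.
apply: contrapT => nz; apply: hO; exists z; split; first exact: hr.
exact: nz.
Qed.

Lemma approx : exists M : R, 0 <= M /\ forall (y : X) (eps : R), 0 < eps ->
  exists e, `|y - e| < eps /\ forall n, `|P n e| <= M * `|y|.
Proof.
have [k [x0 [r [r0 hB]]]] := baire_step.
exists (4 * k%:R / r); split; first by rewrite divr_ge0 // ?mulr_ge0 // ltW.
move=> y eps e0.
have [->|y0] := eqVneq y 0.
  exists 0; rewrite subr0 normr0; split => // n; rewrite P0 normr0 mulr0 //.
have ny0 : 0 < `|y| by rewrite normr_gt0.
pose s := r / (2 * `|y|).
have s0 : 0 < s by rewrite divr_gt0 // mulr_gt0.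
have sy : s * `|y| = r / 2 by rewrite /s; field; rewrite gt_eqF.
have yb : ball x0 r (x0 + s *: y).
  rewrite -ball_normE /ball_ /= opprD addrA subrr add0r normrN normrZ gtr0_norm // sy.
  by rewrite ltr_pdivrMr // ltr_pMr // ltr1n.
have c1 := hB _ yb.
have c2 := hB _ (ballxx _ r0).
have se : 0 < s * eps / 2 by rewrite divr_gt0 // mulr_gt0.
have [e1 [E1 B1]] := c1 _ (nbhsx_ballx _ _ se).
have [e2 [E2 B2]] := c2 _ (nbhsx_ballx _ _ se).
exists (s^-1 *: (e1 - e2)); split.
  have eq : y - s^-1 *: (e1 - e2) = s^-1 *: ((x0 + s *: y - e1) - (x0 - e2)).
    by rewrite zhelp [RHS]scalerBr scalerA mulVf ?gt_eqF // scale1r.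
  rewrite eq normrZ gtr0_norm ?invr_gt0 //.
  apply: le_lt_trans (ler_wpM2l _ (ler_normB _ _)) _; first by rewrite ltW // invr_gt0.
  move: B1 B2; rewrite -!ball_normE /ball_ /= => B1 B2.
  rewrite ltr_pdivrMl // (splitr (s * eps)).
  by apply: ltrD.
move=> n; rewrite PZ PB normrZ gtr0_norm ?invr_gt0 //.
have h : `|P n e1 - P n e2| <= k%:R + k%:R by apply: le_trans (ler_normB _ _) (lerD (E1 n) (E2 n)).
apply: le_trans (ler_wpM2l _ h) _; first by rewrite ltW // invr_gt0.
by rewrite /s invf_div le_eqVlt; apply/orP; left; apply/eqP; field; rewrite gt_eqF.
Qed.

Lemma basis_const : exists C : R, 0 <= C /\ forall (x : X) n, `|coef x n *: a n| <= C * `|x|.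
Proof.
have [M [M0 hM]] := approx.
exists (4 * M); split; first by rewrite mulr_ge0.
move=> x n; rewrite -Pdiff.
apply: le_trans (ler_normB _ _) _.
have h1 := iterate_bound M0 hM x n.+1.
have h2 := iterate_bound M0 hM x n.
have : 0 <= M * `|x| by rewrite mulr_ge0.
lra.
Qed.

Lemma coef_list (F : seq X) (z : X -> int) i :
  coef (\sum_(b <- F) b *~ z b) i = \sum_(b <- F) (z b)%:~R * coef b i.
Proof.
elim: F => [|b F IH]; first by rewrite !big_nil coef0.
by rewrite !big_cons coefD -scaler_int coefZ IH.
Qed.

Lemma coef_range b i : range a b -> coef b i = (b == a i)%:R.
Proof. by case=> j _ <-; rewrite coef_a /= (inj_eq a_inj) eq_sym. Qed.

Lemma sum_ind_seq (F : seq X) (z : X -> int) (c : X) : uniq F ->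
  \sum_(b <- F) (z b)%:~R * ((b == c)%:R : R) = if c \in F then (z c)%:~R else 0.
Proof.
elim: F => [|b F IH]; first by rewrite big_nil.
rewrite big_cons /= => /andP [bF uF]; rewrite IH // in_cons.
case: (eqVneq b c) => [<-|ne]; first by rewrite (negbTE bF) ?eqxx /= mulr1 addr0.
by rewrite /= ?mulr0 ?add0r ?(eq_sym c) ?(negbTE ne).
Qed.

Lemma top_indep : top_independent (range a).
Proof.
split; first by case=> j _ h; have := a_neq0 j; rewrite h eqxx.
move=> W /nbhs_ballP [eps e0 hW].
have [C [C0 hC]] := basis_const.
have d0 : 0 < eps / (C + 1) by rewrite divr_gt0 // ltr_wpDl.
exists (ball 0 (eps / (C + 1))); split; first exact: nbhsx_ballx.
move=> F z uF hF hU b bF.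
have [i _ bi] := hF b bF.
apply: hW; rewrite -ball_normE /ball_ /= sub0r normrN.
set x := \sum_(b <- F) b *~ z b in hU.
have cx : coef x i = (z b)%:~R.
  rewrite /x coef_list.
  rewrite (eq_big_seq (fun b0 => (z b0)%:~R * ((b0 == a i)%:R : R))); last first.
    by move=> b0 b0F; rewrite coef_range //; exact: hF.
  by rewrite sum_ind_seq // bi bF.
have -> : b *~ z b = coef x i *: a i by rewrite cx scaler_int bi.
apply: le_lt_trans (hC x i) _.
move: hU; rewrite -ball_normE /ball_ /= sub0r normrN => hU.
have hx : 0 <= `|x| by [].
have : C * `|x| <= C * (eps / (C + 1)) by rewrite ler_wpM2l // ltW.
move=> h; apply: le_lt_trans h _.
rewrite mulrA ltr_pdivrMr ?ltr_wpDl //.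
by rewrite mulrDr mulr1 (mulrC eps) ltrDl.
Qed.

Lemma not_tych : ~ is_tychonoff_direct_sum (range a).
Proof.
case=> _ _ hc _.
pose D := dsum_carrier (range a).
pose m k := (Num.trunc (`|a k|^-1)).+1.
pose g k : {ptws X -> X} := fun x => if x == a k then a k *+ m k else 0.
pose g0 : {ptws X -> X} := fun _ => 0.
have Dg0 : D g0.
  split; first by apply: (@sub_finite_set _ _ set0); [move=> x /=; rewrite eqxx | exact: finite_set0].
  by split => // x _; exists 0; rewrite mulr0z.
have Dg k : D (g k).
  split.
    apply: (@sub_finite_set _ _ [set a k]); last exact: finite_set1.
    move=> x /=.
    by rewrite /g; case: (eqVneq x (a k)) => // _; rewrite eqxx.
  split.
    move=> x nx; rewrite /g; case: (eqVneq x (a k)) => // xa.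
    by exfalso; apply: nx; exists k.
  move=> x _; rewrite /g; case: (eqVneq x (a k)) => [->|_].
    by exists (m k); rewrite pmulrn.
  by exists 0; rewrite mulr0z.
have sg0 : dsum_map g0 = 0 by rewrite /dsum_map fsbig1.
have sg k : dsum_map (g k) = a k *+ m k.
  rewrite /dsum_map -(@fsbig_widen _ _ _ _ [set a k]) //; first by rewrite fsbig_set1 /g eqxx.
  by move=> x [_ /= nx]; rewrite /g; case: (eqVneq x (a k)).
have pg : g @ \oo --> g0.
  apply/pointwise_cvgP => t.
  change ((fun k => g k t) @ \oo --> g0 t).
  apply: cvg_near_cst.
  have [[j tj]|nj] := pselect (exists j, t = a j).
    near=> k; rewrite /g /g0 tj (inj_eq a_inj) ifF //; apply: ltn_eqF.
    by near: k; exists j.+1.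
  by near=> k; rewrite /g; case: (eqVneq t (a k)) => // tk; exfalso; apply: nj; exists k.
have hs : (fun k => dsum_map (g k)) @ \oo --> dsum_map g0.
  have h1 : (g : nat -> subspace D) @ \oo --> (g0 : subspace D).
    move=> Q hQ0; have : nbhs_subspace (g0 : subspace D) Q := hQ0.
    rewrite -(nbhs_subspace_in Dg0) => hQ.
    have [N _ hN] := pg _ hQ; exists N => // n /= Nn; apply: (hN n Nn); exact: Dg.
  exact: (cvg_comp _ _ h1 (hc g0)).
have /cvgr0_norm_lt /(_ _ ltr01) [N _ hN] : (fun k => dsum_map (g k)) @ \oo --> 0.
  by rewrite -sg0.
have := hN N (leqnn N); rewrite /= sg normrMn -mulr_natl.
have aN : 0 < `|a N| by rewrite normr_gt0 a_neq0.
have := truncnS_gt (`|a N|^-1); rewrite -/(m N) -(ltr_pM2r aN) mulVf ?gt_eqF //.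
by move=> h1 h2; have := lt_trans h1 h2; rewrite ltxx.
Unshelve. all: by end_near.
Qed.

End Basis.

Theorem mainTheorem8 (R : realType) (X : completeNormedModType R)
    (a : nat -> X) :
  infinite_dimensional X -> schauder_basis a ->
  top_independent (range a) /\ ~ is_tychonoff_direct_sum (range a).
Proof.
move=> _ hb; split; [exact: top_indep hb | exact: not_tych hb].
Qed.
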